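(* Let $s=2$, $n=4$, and for $a\in(0,1/8)$ set $p_{12}=p_{23}=p_{34}=p_{41}=a$ and $p_{13}=p_{24}=\frac14(1-8a)$ (with $p_{ji}=p_{ij}$). Take initial data $y_1=(X_0,0)$, $y_2=(0,X_0)$, $y_3=(-X_0,0)$, $y_4=(0,-X_0)$ with $X_0>0$, and let $Y(t)$ be the solution of the gradient flow of relative entropy. Then: (i) if $\beta(x)=(1+x)^{-1}$ and $a\in(1/10,1/8)$, there is a constant $c>0$ such that $\operatorname{diam}Y(t)\ge c\,t^{1/4}$ for all $t\ge1$; (ii) if $\beta(x)=e^{-x}$ and $a\in(1/12,1/8)$, there is a constant $c>0$ such that $\operatorname{diam}Y(t)\ge c$ for all $t\ge0$.
   Context: Let $\mathcal{P}_n=\{(i,j): i\neq j\}$ and $(p_{ij})$ a symmetric probability distribution on $\mathcal{P}_n$. For $Y=(y_1,\dots,y_n)\in(\mathbb{R}^s)^n$ define $q_{ij}=\beta(|y_i-y_j|^2)/\sum_{k\neq \ell}\beta(|y_k-y_\ell|^2)$. The gradient flow of relative entropy is the ODE system $$\frac{dy_i}{dt}=4\sum_{j\neq i}(p_{ij}-q_{ij})(y_i-y_j)(\log\beta)'(|y_i-y_j|^2),\qquad i=1,\dots,n.$$ $\operatorname{diam}Y=\max_{i,j}|y_i-y_j|$. *)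

(* Defs.v *)
From Stdlib Require Import Reals Lra Arith.
From Coquelicot Require Import Coquelicot.
Open Scope R_scope.

(* Configurations of n = 4 points in R^2 (s = 2): Y i = (first, second coordinate),
   indices i = 0,1,2,3 correspond to the paper's points 1,2,3,4. *)
Definition config := nat -> R * R.

Definition sum4 (f : nat -> R) : R := f 0%nat + f 1%nat + f 2%nat + f 3%nat.
Definition max4 (f : nat -> R) : R := Rmax (Rmax (f 0%nat) (f 1%nat)) (Rmax (f 2%nat) (f 3%nat)).

(* p_{ij}: p_12=p_23=p_34=p_41=a, p_13=p_24=(1-8a)/4, p_ii = 0.
   With 0-based indices, i,j adjacent on the 4-cycle iff i+j odd. *)
Definition pmat (a : R) (i j : nat) : R :=
  if Nat.eqb i j then 0
  else if Nat.eqb (Nat.modulo (i + j) 2) 0 then (1 - 8 * a) / 4 else a.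

Definition sqdist (Y : config) (i j : nat) : R :=
  (fst (Y i) - fst (Y j)) ^ 2 + (snd (Y i) - snd (Y j)) ^ 2.

Definition Zsum (beta : R -> R) (Y : config) : R :=
  sum4 (fun k => sum4 (fun l => if Nat.eqb k l then 0 else beta (sqdist Y k l))).

Definition qmat (beta : R -> R) (Y : config) (i j : nat) : R :=
  beta (sqdist Y i j) / Zsum beta Y.

Definition dlogb (beta : R -> R) (x : R) : R := Derive (fun u => ln (beta u)) x.

Definition rhs1 (a : R) (beta : R -> R) (Y : config) (i : nat) : R :=
  4 * sum4 (fun j => if Nat.eqb i j then 0 else
    (pmat a i j - qmat beta Y i j) * (fst (Y i) - fst (Y j)) * dlogb beta (sqdist Y i j)).
Definition rhs2 (a : R) (beta : R -> R) (Y : config) (i : nat) : R :=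
  4 * sum4 (fun j => if Nat.eqb i j then 0 else
    (pmat a i j - qmat beta Y i j) * (snd (Y i) - snd (Y j)) * dlogb beta (sqdist Y i j)).

Definition is_flow_solution (a : R) (beta : R -> R) (Y : R -> config) : Prop :=
  (forall i : nat, (i < 4)%nat ->
     filterlim (fun t => fst (Y t i)) (at_right 0) (locally (fst (Y 0 i))) /\
     filterlim (fun t => snd (Y t i)) (at_right 0) (locally (snd (Y 0 i)))) /\
  (forall t : R, 0 < t -> forall i : nat, (i < 4)%nat ->
     is_derive (fun u => fst (Y u i)) t (rhs1 a beta (Y t) i) /\
     is_derive (fun u => snd (Y u i)) t (rhs2 a beta (Y t) i)).

Definition init_config (X0 : R) : config :=
  fun i => match i with
           | 0%nat => (X0, 0)
           | 1%nat => (0, X0)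
           | 2%nat => (- X0, 0)
           | _ => (0, - X0)
           end.

Definition diam (Y : config) : R :=
  max4 (fun i => max4 (fun j => sqrt (sqdist Y i j))).

Definition beta_cauchy (x : R) : R := / (1 + x).
Definition beta_gauss (x : R) : R := exp (- x).

(* Main.v *)
Require Import Defs.
From Stdlib Require Import Reals Lra Lia.
From Coquelicot Require Import Coquelicot.
Open Scope R_scope.

Lemma ball_lt (x e y : R) : ball x e y -> x - e < y < x + e.
Proof. intro H. change (Rabs (y - x) < e) in H. apply Rabs_def2 in H. destruct H; lra. Qed.

Definition ext (f : R -> R) := fun u => f (Rmax 0 u).

Lemma ext_cont (f : R -> R) :
  filterlim f (at_right 0) (locally (f 0)) ->
  (forall t, 0 < t -> continuous f t) ->
  forall s, continuous (ext f) s.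
Proof.
  intros Hr Hc s.
  destruct (Rtotal_order s 0) as [Hs|[Hs|Hs]].
  - apply (continuous_ext_loc _ (fun _ => f 0)).
    + assert (Hp : 0 < - s) by lra.
      exists (mkposreal _ Hp). intros y Hy. apply ball_lt in Hy. simpl in Hy.
      unfold ext. rewrite Rmax_left; [reflexivity|].
      destruct Hy; lra.
    + apply continuous_const.
  - subst s. intros P HP.
    unfold ext in HP. rewrite Rmax_left in HP by lra.
    destruct HP as [eps He].
    specialize (Hr (ball (f 0) eps)). 
    assert (Hl : locally (f 0) (ball (f 0) eps)) by (exists eps; auto).
    specialize (Hr Hl). destruct Hr as [d Hd].
    exists d. intros y Hy. apply He. unfold ext.
    destruct (Rle_lt_dec y 0) as [Hy0|Hy0].
    + rewrite Rmax_left by lra. apply ball_center.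
    + rewrite Rmax_right by lra. apply Hd; auto.
  - apply (continuous_ext_loc _ f).
    + exists (mkposreal _ Hs). intros y Hy. apply ball_lt in Hy. simpl in Hy.
      unfold ext. rewrite Rmax_right; [reflexivity|].
      destruct Hy; lra.
    + apply Hc; exact Hs.
Qed.

Lemma ext_deriv (f : R -> R) x l : 0 < x -> is_derive f x l -> is_derive (ext f) x l.
Proof.
  intros Hx Hd. apply (is_derive_ext_loc f); auto.
  exists (mkposreal _ Hx). intros y Hy. apply ball_lt in Hy. simpl in Hy.
  unfold ext. rewrite Rmax_right; [reflexivity|].
  destruct Hy; lra.
Qed.

Lemma mvt0 (f df : R -> R) t : 0 < t ->
  (forall s, 0 < s -> is_derive f s (df s)) ->
  (forall s, continuous (ext f) s) ->
  exists c, 0 <= c <= t /\ f t - f 0 = df c * t.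
Proof.
  intros Ht Hd Hc.
  destruct (MVT_gen (ext f) 0 t df) as [c [Hc1 Hc2]].
  - intros x Hx. rewrite Rmin_left in Hx by lra. rewrite Rmax_right in Hx by lra.
    apply ext_deriv; [lra|]. apply Hd; lra.
  - intros x _. apply continuity_pt_filterlim. apply Hc.
  - rewrite Rmin_left in Hc1 by lra. rewrite Rmax_right in Hc1 by lra.
    exists c. split; auto. unfold ext in Hc2.
    rewrite Rmax_right in Hc2 by lra. rewrite Rmax_left in Hc2 by lra.
    lra.
Qed.

Lemma bound_on (f : R -> R) T : 0 <= T ->
  (forall s, continuous (ext f) s) ->
  exists M, forall s, 0 <= s <= T -> f s <= M.
Proof.
  intros HT Hc.
  destruct (continuity_ab_maj (ext f) 0 T HT) as [m [Hm _]].
  - intros c _. apply continuity_pt_filterlim. apply Hc.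
  - exists (ext f m). intros s Hs. specialize (Hm s Hs). unfold ext in Hm at 1.
    rewrite Rmax_right in Hm by lra. exact Hm.
Qed.

Lemma deriv_cont (f : R -> R) t l : is_derive f t l -> continuous f t.
Proof. intro H. exact (@ex_derive_continuous R_AbsRing R_NormedModule f t (ex_intro _ l H)). Qed.

Lemma cont_plus (f g : R -> R) x : continuous f x -> continuous g x -> continuous (fun y => f y + g y) x.
Proof. intros. exact (continuous_plus f g x H H0). Qed.
Lemma cont_mult (f g : R -> R) x : continuous f x -> continuous g x -> continuous (fun y => f y * g y) x.
Proof. intros. exact (continuous_mult f g x H H0). Qed.
Lemma cont_minus (f g : R -> R) x : continuous f x -> continuous g x -> continuous (fun y => f y - g y) x.
Proof. intros. exact (continuous_minus f g x H H0). Qed.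
Lemma cont_opp (f : R -> R) x : continuous f x -> continuous (fun y => - f y) x.
Proof. intros. exact (continuous_opp f x H). Qed.
Lemma der_plus (f g : R -> R) x a b : is_derive f x a -> is_derive g x b -> is_derive (fun y => f y + g y) x (a + b).
Proof. intros. exact (is_derive_plus f g x a b H H0). Qed.
Lemma der_minus (f g : R -> R) x a b : is_derive f x a -> is_derive g x b -> is_derive (fun y => f y - g y) x (a - b).
Proof. intros. exact (is_derive_minus f g x a b H H0). Qed.
Lemma der_mult (f g : R -> R) x a b : is_derive f x a -> is_derive g x b -> is_derive (fun y => f y * g y) x (a * g x + f x * b).
Proof. intros. exact (is_derive_mult f g x a b H H0 Rmult_comm). Qed.

Definition coord (Y : config) (k : nat) : R :=
  if (k <? 4)%nat then fst (Y k) else snd (Y (k-4)%nat).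
Fixpoint sumk (n : nat) (f : nat -> R) : R :=
  match n with O => 0 | S m => sumk m f + f m end.

Lemma sumk_nonneg n f : (forall k, (k < n)%nat -> 0 <= f k) -> 0 <= sumk n f.
Proof. induction n; simpl; intros H. lra. assert (0 <= f n) by (apply H; lia).
  assert (0 <= sumk n f) by (apply IHn; intros; apply H; lia). lra. Qed.
Lemma sumk_ge_term n f k : (forall j, (j < n)%nat -> 0 <= f j) -> (k < n)%nat -> f k <= sumk n f.
Proof. induction n; simpl; intros H Hk. lia.
  destruct (Nat.eq_dec k n). subst. assert (0 <= sumk n f) by (apply sumk_nonneg; intros; apply H; lia). lra.
  assert (f k <= sumk n f) by (apply IHn; [intros; apply H; lia| lia]). assert (0 <= f n) by (apply H; lia). lra. Qed.
Lemma sumk_le n f g : (forall k, (k < n)%nat -> f k <= g k) -> sumk n f <= sumk n g.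
Proof. induction n; simpl; intros H. lra. assert (f n <= g n) by (apply H; lia).
  assert (sumk n f <= sumk n g) by (apply IHn; intros; apply H; lia). lra. Qed.
Lemma sumk_scal n c f : sumk n (fun k => c * f k) = c * sumk n f.
Proof. induction n; simpl. ring. rewrite IHn. ring. Qed.
Lemma sumk_ext n f g : (forall k, (k < n)%nat -> f k = g k) -> sumk n f = sumk n g.
Proof. induction n; simpl; intros H. reflexivity. f_equal. apply IHn. intros; apply H; lia. apply H; lia. Qed.
Lemma sumk_zero n f : (forall k, (k < n)%nat -> 0 <= f k) -> sumk n f <= 0 -> forall k, (k < n)%nat -> f k = 0.
Proof. intros H1 H2 k Hk. assert (f k <= sumk n f) by (apply sumk_ge_term; auto).
  assert (0 <= f k) by auto. lra. Qed.
Lemma sumk_CS n u : (sumk n (fun k => Rabs (u k))) ^ 2 <= INR n * sumk n (fun k => (u k) ^ 2).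
Proof.
  induction n. simpl. lra. cbn [sumk].
  set (A := sumk n (fun k => Rabs (u k))) in *.
  set (SS := sumk n (fun k => u k ^ 2)) in *.
  assert (HA : 0 <= A) by (apply sumk_nonneg; intros; apply Rabs_pos).
  assert (HS : 0 <= SS) by (apply sumk_nonneg; intros; apply pow2_ge_0).
  assert (Hx : Rabs (u n) ^ 2 = u n ^ 2) by (unfold Rabs; destruct Rcase_abs; ring).
  set (x := Rabs (u n)) in *. assert (Hx0 : 0 <= x) by apply Rabs_pos.
  rewrite <- Hx. destruct n.
  - unfold A, SS; simpl. lra.
  - rewrite S_INR. assert (Hn : 0 < INR (S n)) by (apply lt_0_INR; lia).
    set (m := INR (S n)) in *. clearbody A SS x m.
    assert (H2 : 2 * A * x <= SS + m * x ^ 2).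
    { assert (0 <= (A - m * x) ^ 2) by apply pow2_ge_0.
      apply Rmult_le_reg_l with m; auto. nra. }
    nra.
Qed.

Definition bnd (M : R) (Y : config) := forall k, (k < 8)%nat -> Rabs (coord Y k) <= M.
Definition dst (Y Z : config) := sumk 8 (fun k => Rabs (coord Y k - coord Z k)).
Definition LB (M : R) (f : config -> R) := exists B L, 0 <= B /\ 0 <= L /\
  forall Y Z, bnd M Y -> bnd M Z -> Rabs (f Y) <= B /\ Rabs (f Y - f Z) <= L * dst Y Z.

Lemma dst_nonneg Y Z : 0 <= dst Y Z.
Proof. apply sumk_nonneg. intros; apply Rabs_pos. Qed.

Lemma LB_ext M f g : (forall Y, f Y = g Y) -> LB M g -> LB M f.
Proof. intros E [B [L [HB [HL H]]]]. exists B, L. split; [|split]; auto. intros Y Z HY HZ. rewrite !E. apply H; auto. Qed.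

Lemma LB_const M c : LB M (fun _ => c).
Proof. exists (Rabs c), 0. split; [apply Rabs_pos|split; [lra|]]. intros Y Z _ _. split. lra.
  rewrite Rminus_diag, Rabs_R0. lra. Qed.

Lemma LB_coord M k : (k < 8)%nat -> 0 <= M -> LB M (fun Y => coord Y k).
Proof. intros Hk HM. exists M, 1. split; [lra|split; [lra|]]. intros Y Z HY HZ. split. apply HY; auto.
  rewrite Rmult_1_l. unfold dst.
  apply (sumk_ge_term 8 (fun k => Rabs (coord Y k - coord Z k))); auto.
  intros; apply Rabs_pos. Qed.

Lemma LB_fst M i : (i < 4)%nat -> 0 <= M -> LB M (fun Y => fst (Y i)).
Proof. intros Hi HM. apply (LB_ext _ _ (fun Y => coord Y i)).
  intro Y. unfold coord. rewrite (proj2 (Nat.ltb_lt i 4) Hi). reflexivity.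
  apply LB_coord; auto; lia. Qed.

Lemma LB_snd M i : (i < 4)%nat -> 0 <= M -> LB M (fun Y => snd (Y i)).
Proof. intros Hi HM. apply (LB_ext _ _ (fun Y => coord Y (i+4))).
  intro Y. unfold coord. rewrite (proj2 (Nat.ltb_ge (i+4) 4)) by lia.
  replace (i + 4 - 4)%nat with i by lia. reflexivity.
  apply LB_coord; auto; lia. Qed.

Lemma LB_plus M f g : LB M f -> LB M g -> LB M (fun Y => f Y + g Y).
Proof. intros [B1 [L1 [HB1 [HL1 H1]]]] [B2 [L2 [HB2 [HL2 H2]]]].
  exists (B1 + B2), (L1 + L2). split; [lra|split; [lra|]]. intros Y Z HY HZ. split;
  destruct (H1 Y Z HY HZ) as [a1 b1]; destruct (H2 Y Z HY HZ) as [a2 b2].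
  - eapply Rle_trans. apply Rabs_triang. lra.
  - replace (f Y + g Y - (f Z + g Z)) with ((f Y - f Z) + (g Y - g Z)) by ring.
    eapply Rle_trans. apply Rabs_triang. lra.
Qed.

Lemma LB_opp M f : LB M f -> LB M (fun Y => - f Y).
Proof. intros [B1 [L1 [HB1 [HL1 H1]]]]. exists B1, L1. split; [lra|split; [lra|]]. intros Y Z HY HZ. split;
  destruct (H1 Y Z HY HZ) as [a1 b1].
  - rewrite Rabs_Ropp; auto.
  - replace (- f Y - - f Z) with (- (f Y - f Z)) by ring. rewrite Rabs_Ropp; auto. Qed.

Lemma LB_minus M f g : LB M f -> LB M g -> LB M (fun Y => f Y - g Y).
Proof. intros. apply (LB_ext _ _ (fun Y => f Y + - g Y)). intro; ring.
  apply LB_plus; auto. apply LB_opp; auto. Qed.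

Lemma LB_mult M f g : LB M f -> LB M g -> LB M (fun Y => f Y * g Y).
Proof. intros [B1 [L1 [HB1 [HL1 H1]]]] [B2 [L2 [HB2 [HL2 H2]]]].
  exists (B1 * B2), (B1 * L2 + B2 * L1). split; [nra|split; [nra|]]. intros Y Z HY HZ. split;
  destruct (H1 Y Z HY HZ) as [a1 b1]; destruct (H2 Y Z HY HZ) as [a2 b2];
  destruct (H2 Z Y HZ HY) as [a2' _].
  - rewrite Rabs_mult. apply Rmult_le_compat; auto; apply Rabs_pos.
  - replace (f Y * g Y - f Z * g Z) with (f Y * (g Y - g Z) + g Z * (f Y - f Z)) by ring.
    eapply Rle_trans. apply Rabs_triang. rewrite !Rabs_mult.
    pose proof (dst_nonneg Y Z).
    assert (Rabs (f Y) * Rabs (g Y - g Z) <= B1 * (L2 * dst Y Z))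
      by (apply Rmult_le_compat; auto; apply Rabs_pos).
    assert (Rabs (g Z) * Rabs (f Y - f Z) <= B2 * (L1 * dst Y Z))
      by (apply Rmult_le_compat; auto; apply Rabs_pos).
    nra.
Qed.

Lemma LB_inv M f : (exists d, 0 < d /\ forall Y, bnd M Y -> d <= f Y) -> LB M f -> LB M (fun Y => / f Y).
Proof. intros [d [Hd Hf]] [B1 [L1 [HB1 [HL1 H1]]]].
  exists (/ d), (L1 / (d * d)). split; [|split].
  - left; apply Rinv_0_lt_compat; auto.
  - apply Rmult_le_pos; auto. left; apply Rinv_0_lt_compat; nra.
  - intros Y Z HY HZ. split.
  + pose proof (Hf Y HY). rewrite Rabs_pos_eq.
    apply Rinv_le_contravar; auto. left; apply Rinv_0_lt_compat; lra.
  + pose proof (Hf Y HY). pose proof (Hf Z HZ).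
    destruct (H1 Z Y HZ HY) as [_ b].
    replace (/ f Y - / f Z) with ((f Z - f Y) / (f Y * f Z)) by (field; lra).
    unfold Rdiv. rewrite Rabs_mult. rewrite (Rabs_pos_eq (/ (f Y * f Z))).
    2: left; apply Rinv_0_lt_compat; nra.
    assert (dZY : dst Z Y = dst Y Z).
    { unfold dst. apply sumk_ext. intros. rewrite Rabs_minus_sym. reflexivity. }
    rewrite dZY in b.
    assert (/ (f Y * f Z) <= / (d * d)) by (apply Rinv_le_contravar; nra).
    assert (0 <= / (f Y * f Z)) by (left; apply Rinv_0_lt_compat; nra).
    pose proof (dst_nonneg Y Z).
    apply Rle_trans with (L1 * dst Y Z * / (d * d)).
    apply Rmult_le_compat; auto; apply Rabs_pos. 
    right; field; lra.
Qed.

Lemma LB_phi M (phi : R -> R) f :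
  (forall x, 0 <= x -> Rabs (phi x) <= 1) ->
  (forall x y, 0 <= x -> 0 <= y -> Rabs (phi x - phi y) <= Rabs (x - y)) ->
  (forall Y, 0 <= f Y) -> LB M f -> LB M (fun Y => phi (f Y)).
Proof. intros Hp1 Hp2 Hf [B1 [L1 [HB1 [HL1 H1]]]].
  exists 1, L1. split; [lra|split; [lra|]]. intros Y Z HY HZ. split. apply Hp1; auto.
  eapply Rle_trans. apply Hp2; auto. apply H1; auto. Qed.

Lemma LB_sum4 M (f : nat -> config -> R) : (forall j, (j < 4)%nat -> LB M (f j)) ->
  LB M (fun Y => sum4 (fun j => f j Y)).
Proof. intros H. unfold sum4. repeat apply LB_plus; apply H; lia. Qed.

Lemma LB_if M (b : bool) f g : LB M f -> LB M g -> LB M (fun Y => if b then f Y else g Y).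
Proof. intros; destruct b; auto. Qed.

Lemma LB_fin M (f : nat -> config -> R) n : (forall k, (k < n)%nat -> LB M (f k)) ->
  exists L, 0 <= L /\ forall k Y Z, (k < n)%nat -> bnd M Y -> bnd M Z ->
     Rabs (f k Y - f k Z) <= L * dst Y Z.
Proof.
  induction n; intros H.
  - exists 0. split. lra. intros; lia.
  - destruct IHn as [L [HL HL']]. intros; apply H; lia.
    destruct (H n ltac:(lia)) as [B [L2 [_ [HL2 H2]]]].
    exists (L + L2). split. lra. intros k Y Z Hk HY HZ.
    pose proof (dst_nonneg Y Z).
    destruct (Nat.eq_dec k n). subst. destruct (H2 Y Z HY HZ). nra.
    pose proof (HL' k Y Z ltac:(lia) HY HZ). nra.
Qed.

Definition betaOK (beta g : R -> R) :=
  (forall x, 0 <= x -> 0 < beta x /\ Rabs (beta x) <= 1) /\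
  (forall x y, 0 <= x -> 0 <= y -> Rabs (beta x - beta y) <= Rabs (x - y)) /\
  (forall D, 0 <= D -> exists d, 0 < d /\ forall x, 0 <= x <= D -> d <= beta x) /\
  (forall x, 0 <= x -> Rabs (g x) <= 1) /\
  (forall x y, 0 <= x -> 0 <= y -> Rabs (g x - g y) <= Rabs (x - y)) /\
  (forall x, 0 <= x -> dlogb beta x = g x).

Lemma sqdist_nonneg Y i j : 0 <= sqdist Y i j.
Proof. unfold sqdist. pose proof (pow2_ge_0 (fst (Y i) - fst (Y j))).
  pose proof (pow2_ge_0 (snd (Y i) - snd (Y j))). lra. Qed.

Lemma abs_le x M : Rabs x <= M -> -M <= x <= M.
Proof. unfold Rabs; destruct Rcase_abs; lra. Qed.

Lemma LB_sqdist M i j : (i < 4)%nat -> (j < 4)%nat -> 0 <= M -> LB M (fun Y => sqdist Y i j).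
Proof. intros Hi Hj HM. unfold sqdist. apply LB_plus.
  - apply (LB_ext _ _ (fun Y => (fst (Y i) - fst (Y j)) * (fst (Y i) - fst (Y j)))). intro; ring.
    apply LB_mult; apply LB_minus; apply LB_fst; auto.
  - apply (LB_ext _ _ (fun Y => (snd (Y i) - snd (Y j)) * (snd (Y i) - snd (Y j)))). intro; ring.
    apply LB_mult; apply LB_minus; apply LB_snd; auto.
Qed.

Lemma Zsum_lower beta g M : betaOK beta g -> 0 <= M ->
  exists d, 0 < d /\ forall Y, bnd M Y -> d <= Zsum beta Y.
Proof.
  intros [H1 [_ [H3 _]]] HM.
  destruct (H3 (8 * M ^ 2)) as [d [Hd Hd']]. nra.
  exists d. split; auto. intros Y HY.
  assert (Hb : forall k l, 0 < beta (sqdist Y k l)) by (intros; apply H1; apply sqdist_nonneg).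
  assert (Hs : sqdist Y 0 1 <= 8 * M ^ 2).
  { pose proof (abs_le _ _ (HY 0%nat ltac:(lia))). pose proof (abs_le _ _ (HY 1%nat ltac:(lia))).
    pose proof (abs_le _ _ (HY 4%nat ltac:(lia))). pose proof (abs_le _ _ (HY 5%nat ltac:(lia))).
    unfold coord in *; simpl in *. unfold sqdist. nra. }
  pose proof (Hd' (sqdist Y 0 1) (conj (sqdist_nonneg _ _ _) Hs)).
  unfold Zsum, sum4; simpl.
  pose proof (Hb 0 2)%nat. pose proof (Hb 0 3)%nat.
  pose proof (Hb 1 0)%nat. pose proof (Hb 1 2)%nat. pose proof (Hb 1 3)%nat.
  pose proof (Hb 2 0)%nat. pose proof (Hb 2 1)%nat. pose proof (Hb 2 3)%nat.
  pose proof (Hb 3 0)%nat. pose proof (Hb 3 1)%nat. pose proof (Hb 3 2)%nat.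
  lra.
Qed.

Lemma LB_beta beta g M i j : betaOK beta g -> (i < 4)%nat -> (j < 4)%nat -> 0 <= M ->
  LB M (fun Y => beta (sqdist Y i j)).
Proof. intros [H1 [H2 _]] Hi Hj HM. apply LB_phi.
  intros x Hx; apply (H1 x Hx). exact H2. intro Y; apply sqdist_nonneg. apply LB_sqdist; auto. Qed.

Lemma LB_Zsum beta g M : betaOK beta g -> 0 <= M -> LB M (fun Y => Zsum beta Y).
Proof. intros Hb HM. unfold Zsum. apply LB_sum4; intros k Hk. apply LB_sum4; intros l Hl.
  apply LB_if. apply LB_const. apply (LB_beta beta g); auto. Qed.

Lemma LB_qmat beta g M i j : betaOK beta g -> (i < 4)%nat -> (j < 4)%nat -> 0 <= M ->
  LB M (fun Y => qmat beta Y i j).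
Proof. intros Hb Hi Hj HM. unfold qmat, Rdiv. apply LB_mult. apply (LB_beta beta g); auto.
  apply LB_inv. apply (Zsum_lower beta g); auto. apply (LB_Zsum beta g); auto. Qed.

Lemma LB_dlogb beta g M i j : betaOK beta g -> (i < 4)%nat -> (j < 4)%nat -> 0 <= M ->
  LB M (fun Y => dlogb beta (sqdist Y i j)).
Proof. intros Hb Hi Hj HM. pose proof Hb as [_ [_ [_ [G1 [G2 G3]]]]].
  apply (LB_ext _ _ (fun Y => g (sqdist Y i j))). intro; apply G3, sqdist_nonneg.
  apply LB_phi. exact G1. exact G2. intro Y; apply sqdist_nonneg. apply LB_sqdist; auto. Qed.

Lemma LB_rhs1 a beta g M i : betaOK beta g -> (i < 4)%nat -> 0 <= M ->
  LB M (fun Y => rhs1 a beta Y i).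
Proof. intros Hb Hi HM. unfold rhs1. apply LB_mult. apply LB_const.
  apply LB_sum4; intros j Hj. apply LB_if. apply LB_const.
  apply LB_mult. apply LB_mult. apply LB_minus. apply LB_const. apply (LB_qmat beta g); auto.
  apply LB_minus; apply LB_fst; auto. apply (LB_dlogb beta g); auto. Qed.

Lemma LB_rhs2 a beta g M i : betaOK beta g -> (i < 4)%nat -> 0 <= M ->
  LB M (fun Y => rhs2 a beta Y i).
Proof. intros Hb Hi HM. unfold rhs2. apply LB_mult. apply LB_const.
  apply LB_sum4; intros j Hj. apply LB_if. apply LB_const.
  apply LB_mult. apply LB_mult. apply LB_minus. apply LB_const. apply (LB_qmat beta g); auto.
  apply LB_minus; apply LB_snd; auto. apply (LB_dlogb beta g); auto. Qed.

Definition Fk (a : R) (beta : R -> R) (Y : config) (k : nat) : R :=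
  if (k <? 4)%nat then rhs1 a beta Y k else rhs2 a beta Y (k-4)%nat.

Lemma LB_Fk a beta g M k : betaOK beta g -> (k < 8)%nat -> 0 <= M -> LB M (fun Y => Fk a beta Y k).
Proof. intros Hb Hk HM. unfold Fk. destruct (k <? 4)%nat eqn:E.
  apply (LB_rhs1 a beta g); auto. apply Nat.ltb_lt; auto.
  apply (LB_rhs2 a beta g); auto. apply Nat.ltb_ge in E. lia. Qed.

Lemma der_eq (f : R -> R) x l l' : is_derive f x l -> l = l' -> is_derive f x l'.
Proof. intros H E; subst; auto. Qed.

Lemma der_sq (f : R -> R) x l : is_derive f x l -> is_derive (fun u => f u ^ 2) x (2 * f x * l).
Proof. intro H. eapply der_eq. apply (is_derive_pow f 2 x l H). simpl. ring. Qed.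

Lemma cont_sq (f : R -> R) x : continuous f x -> continuous (fun u => f u ^ 2) x.
Proof. intro H. apply (continuous_ext (fun u => f u * f u)). intro; simpl; ring.
  apply cont_mult; auto. Qed.

Lemma der_sumk (f : R -> nat -> R) df n x :
  (forall k, (k < n)%nat -> is_derive (fun u => f u k) x (df k)) ->
  is_derive (fun u => sumk n (f u)) x (sumk n df).
Proof. induction n; intros H; simpl.
  - apply (is_derive_const 0).
  - apply der_plus. apply IHn; intros; apply H; lia. apply H; lia. Qed.

Lemma cont_sumk (f : R -> nat -> R) n x :
  (forall k, (k < n)%nat -> continuous (fun u => f u k) x) ->
  continuous (fun u => sumk n (f u)) x.
Proof. induction n; intros H; simpl.
  - apply continuous_const.
  - apply cont_plus. apply IHn; intros; apply H; lia. apply H; lia. Qed.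

Lemma cont_all (g : R -> R) : (forall x, continuous g x) -> forall s, continuous (ext g) s.
Proof. intros Hg. apply ext_cont.
  - intros P HP. specialize (Hg 0 P HP). unfold filtermap, at_right, within in *.
    eapply filter_imp; [|exact Hg]. intros x Hx _. exact Hx.
  - intros; auto. Qed.

Lemma coord_der a beta Y s k : is_flow_solution a beta Y -> 0 < s -> (k < 8)%nat ->
  is_derive (fun u => coord (Y u) k) s (Fk a beta (Y s) k).
Proof. intros [_ HY] Hs Hk. unfold coord, Fk. destruct (k <? 4)%nat eqn:E.
  - apply Nat.ltb_lt in E. apply (HY s Hs k E).
  - apply Nat.ltb_ge in E. apply (HY s Hs (k-4)%nat ltac:(lia)). Qed.

Lemma coord_cont a beta Y k : is_flow_solution a beta Y -> (k < 8)%nat ->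
  forall s, continuous (ext (fun u => coord (Y u) k)) s.
Proof. intros HY Hk. apply ext_cont.
  - destruct HY as [HY _]. unfold coord. destruct (k <? 4)%nat eqn:E.
    + apply Nat.ltb_lt in E. apply (HY k E).
    + apply Nat.ltb_ge in E. apply (HY (k-4)%nat ltac:(lia)).
  - intros t Ht. eapply deriv_cont. apply (coord_der a beta Y t k HY Ht Hk). Qed.

Lemma abs_le_sq x N : x ^ 2 <= N -> Rabs x <= 1 + N.
Proof. intros H. assert (Rabs x ^ 2 = x ^ 2) by (unfold Rabs; destruct Rcase_abs; ring).
  pose proof (Rabs_pos x). nra. Qed.

Theorem flow_uniq a beta g Y Z : betaOK beta g ->
  is_flow_solution a beta Y -> is_flow_solution a beta Z ->
  (forall i, (i < 4)%nat -> Y 0 i = Z 0 i) ->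
  forall t, 0 <= t -> forall i, (i < 4)%nat -> Y t i = Z t i.
Proof.
  intros Hb HY HZ H0 t Ht i Hi.
  destruct Ht as [Ht|Ht]; [|subst; auto].
  set (N := fun u => sumk 8 (fun k => coord (Y u) k ^ 2) + sumk 8 (fun k => coord (Z u) k ^ 2)).
  destruct (bound_on N t) as [Nm HNm]. lra.
  { intro s. unfold ext, N. apply cont_plus; apply cont_sumk; intros k Hk; apply cont_sq.
    apply (coord_cont a beta Y k HY Hk). apply (coord_cont a beta Z k HZ Hk). }
  set (M := 1 + Nm).
  assert (HN0 : forall u, 0 <= N u).
  { intro u. unfold N. pose proof (sumk_nonneg 8 (fun k => coord (Y u) k ^ 2) ltac:(intros; apply pow2_ge_0)).
    pose proof (sumk_nonneg 8 (fun k => coord (Z u) k ^ 2) ltac:(intros; apply pow2_ge_0)). lra. }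
  assert (HM : 0 <= M). { unfold M. pose proof (HNm 0 ltac:(lra)). pose proof (HN0 0). lra. }
  assert (HbY : forall s, 0 <= s <= t -> bnd M (Y s) /\ bnd M (Z s)).
  { intros s Hs. pose proof (HNm s Hs). unfold M. split; intros k Hk; apply abs_le_sq.
    - assert (coord (Y s) k ^ 2 <= sumk 8 (fun k => coord (Y s) k ^ 2)).
      { apply (sumk_ge_term 8 (fun k => coord (Y s) k ^ 2)); auto. intros; apply pow2_ge_0. }
      pose proof (sumk_nonneg 8 (fun k => coord (Z s) k ^ 2) ltac:(intros; apply pow2_ge_0)).
      unfold N in H. lra.
    - assert (coord (Z s) k ^ 2 <= sumk 8 (fun k => coord (Z s) k ^ 2)).
      { apply (sumk_ge_term 8 (fun k => coord (Z s) k ^ 2)); auto. intros; apply pow2_ge_0. }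
      pose proof (sumk_nonneg 8 (fun k => coord (Y s) k ^ 2) ltac:(intros; apply pow2_ge_0)).
      unfold N in H. lra. }
  destruct (LB_fin M (fun k Y => Fk a beta Y k) 8) as [L [HL HL']].
  { intros k Hk. apply (LB_Fk a beta g); auto. }
  set (E := fun u => sumk 8 (fun k => (coord (Y u) k - coord (Z u) k) ^ 2)).
  set (ED := fun u => sumk 8 (fun k => 2 * (coord (Y u) k - coord (Z u) k) *
                     (Fk a beta (Y u) k - Fk a beta (Z u) k))).
  set (K := 16 * L).
  set (h := fun u => E u * exp (- K * u)).
  set (hD := fun u => ED u * exp (- K * u) + E u * (exp (- K * u) * (- K))).
  destruct (mvt0 h hD t Ht) as [c [Hc Hmv]].
  { intros s Hs. unfold h, hD.
    assert (Hex : is_derive (fun u => exp (- K * u)) s (exp (- K * s) * - K)) by (auto_derive; auto; ring).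
    assert (HEd : is_derive E s (ED s)).
    { unfold E, ED. apply der_sumk. intros k Hk.
      apply (der_sq (fun u => coord (Y u) k - coord (Z u) k) s (Fk a beta (Y s) k - Fk a beta (Z s) k)).
      apply der_minus.
      apply (coord_der a beta Y s k HY Hs Hk). apply (coord_der a beta Z s k HZ Hs Hk). }
    exact (der_mult E (fun u => exp (- K * u)) s _ _ HEd Hex). }
  { intro s. unfold ext, h. apply cont_mult.
    - unfold E. apply cont_sumk. intros k Hk. apply cont_sq. apply cont_minus.
      apply (coord_cont a beta Y k HY Hk). apply (coord_cont a beta Z k HZ Hk).
    - apply (cont_all (fun u => exp (- K * u))). intro x. eapply deriv_cont.
      auto_derive; auto. }
  assert (HE0 : E 0 = 0).
  { unfold E. transitivity (sumk 8 (fun _ => 0)); [|simpl; ring]. apply sumk_ext. intros k Hk.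
    unfold coord. destruct (k <? 4)%nat eqn:Ek.
    - apply Nat.ltb_lt in Ek. rewrite (H0 k Ek). ring.
    - apply Nat.ltb_ge in Ek. rewrite (H0 (k-4)%nat ltac:(lia)). ring. }
  assert (HED : ED c <= K * E c).
  { destruct (HbY c ltac:(lra)) as [Hy Hz].
    set (D := dst (Y c) (Z c)).
    assert (HD : 0 <= D) by apply dst_nonneg.
    apply Rle_trans with (sumk 8 (fun k => (2 * L * D) * Rabs (coord (Y c) k - coord (Z c) k))).
    - apply sumk_le. intros k Hk.
      pose proof (HL' k (Y c) (Z c) Hk Hy Hz). simpl in H.
      set (u := coord (Y c) k - coord (Z c) k) in *.
      set (w := Fk a beta (Y c) k - Fk a beta (Z c) k) in *.
      assert (u * w <= Rabs u * Rabs w).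
      { rewrite <- Rabs_mult. apply Rle_abs. }
      assert (Rabs u * Rabs w <= Rabs u * (L * D)) by (apply Rmult_le_compat_l; auto; apply Rabs_pos).
      nra.
    - rewrite sumk_scal.
      assert (HDe : D = sumk 8 (fun k => Rabs (coord (Y c) k - coord (Z c) k))) by reflexivity.
      pose proof (sumk_CS 8 (fun k => coord (Y c) k - coord (Z c) k)). cbv beta in H. rewrite <- HDe in *.
      unfold E, K. replace (INR 8) with 8 in H by (simpl; ring). nra. }
  assert (Hh0 : h 0 = 0) by (unfold h; rewrite HE0; ring).
  assert (HhD : hD c <= 0).
  { unfold hD. pose proof (exp_pos (- K * c)). nra. }
  assert (Hht : h t <= 0) by nra.
  unfold h in Hht. pose proof (exp_pos (- K * t)).
  assert (HEt : E t <= 0).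
  { destruct (Rle_lt_dec (E t) 0); auto. nra. }
  assert (Hc0 : forall k, (k < 8)%nat -> coord (Y t) k = coord (Z t) k).
  { intros k Hk. pose proof (sumk_zero 8 (fun k => (coord (Y t) k - coord (Z t) k) ^ 2)
       ltac:(intros; apply pow2_ge_0) HEt k Hk). simpl in H1.
    apply Rminus_diag_uniq. nra. }
  pose proof (Hc0 i ltac:(lia)). pose proof (Hc0 (i+4)%nat ltac:(lia)).
  unfold coord in *. rewrite (proj2 (Nat.ltb_lt i 4) Hi) in H1.
  rewrite (proj2 (Nat.ltb_ge (i+4) 4)) in H2 by lia.
  replace (i + 4 - 4)%nat with i in H2 by lia.
  apply injective_projections; auto.
Qed.

Definition rotm (p : R * R) : R * R := (snd p, - fst p).
Definition nx (i : nat) : nat := match i with 0 => 1 | 1 => 2 | 2 => 3 | _ => 0 end%nat.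
Definition sig (Y : config) : config := fun i => rotm (Y (nx i)).

Lemma nx_lt i : (nx i < 4)%nat.
Proof. destruct i as [|[|[|]]]; simpl; lia. Qed.

Lemma sq_sig Y i j : sqdist (sig Y) i j = sqdist Y (nx i) (nx j).
Proof. unfold sqdist, sig, rotm. simpl. ring. Qed.

Lemma Zsum_sig beta Y : Zsum beta (sig Y) = Zsum beta Y.
Proof. unfold Zsum, sum4. cbv beta. rewrite !sq_sig. cbn [Nat.eqb nx]. ring. Qed.

Lemma rhs_sig a beta Y i : (i < 4)%nat ->
  rhs1 a beta (sig Y) i = rhs2 a beta Y (nx i) /\ rhs2 a beta (sig Y) i = - rhs1 a beta Y (nx i).
Proof. intros Hi.
  destruct i as [|[|[|[|]]]]; try lia;
  unfold rhs1, rhs2, qmat, sum4; cbv beta; rewrite !sq_sig, !Zsum_sig;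
  cbn [Nat.eqb nx]; unfold pmat; cbn [Nat.eqb Nat.modulo Nat.add]; simpl;
  unfold sig, rotm; simpl; split; ring.
Qed.

Lemma sig_flow a beta Y : is_flow_solution a beta Y -> is_flow_solution a beta (fun t => sig (Y t)).
Proof.
  intros [H1 H2]. split.
  - intros i Hi. destruct (H1 (nx i) (nx_lt i)) as [A B]. split.
    + exact B.
    + unfold sig, rotm; simpl. eapply filterlim_comp. exact A. apply (@filterlim_opp R_AbsRing R_NormedModule).
  - intros t Ht i Hi. destruct (H2 t Ht (nx i) (nx_lt i)) as [A B].
    destruct (rhs_sig a beta (Y t) i Hi) as [E1 E2]. rewrite E1, E2. split.
    + exact B.
    + unfold sig, rotm; simpl. apply (is_derive_opp (fun u => fst (Y u (nx i)))). exact A.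
Qed.

Lemma symm a beta g X0 Y : betaOK beta g -> Y 0 = init_config X0 -> is_flow_solution a beta Y ->
  forall t, 0 <= t -> forall i, (i < 4)%nat -> Y t i = sig (Y t) i.
Proof.
  intros Hb H0 HY t Ht i Hi.
  apply (flow_uniq a beta g Y (fun t => sig (Y t)) Hb HY (sig_flow a beta Y HY)); auto.
  intros j Hj. rewrite H0. destruct j as [|[|[|[|]]]]; try lia;
  unfold sig, rotm, init_config; simpl; apply injective_projections; simpl; ring.
Qed.

Definition symc (Y : config) : Prop :=
  Y 1%nat = (- snd (Y 0%nat), fst (Y 0%nat)) /\ Y 2%nat = (- fst (Y 0%nat), - snd (Y 0%nat)) /\
  Y 3%nat = (snd (Y 0%nat), - fst (Y 0%nat)).

Lemma symc_of a beta g X0 Y : betaOK beta g -> Y 0 = init_config X0 -> is_flow_solution a beta Y ->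
  forall t, 0 <= t -> symc (Y t).
Proof.
  intros Hb H0 HY t Ht.
  pose proof (symm a beta g X0 Y Hb H0 HY t Ht 0%nat ltac:(lia)) as E0.
  pose proof (symm a beta g X0 Y Hb H0 HY t Ht 1%nat ltac:(lia)) as E1.
  pose proof (symm a beta g X0 Y Hb H0 HY t Ht 2%nat ltac:(lia)) as E2.
  unfold sig, rotm in E0, E1, E2. simpl in E0, E1, E2. unfold symc.
  destruct (Y t 0%nat) as [x0 v0]. destruct (Y t 1%nat) as [x1 v1].
  destruct (Y t 2%nat) as [x2 v2]. destruct (Y t 3%nat) as [x3 v3].
  inversion E0. inversion E1. inversion E2. subst. simpl.
  split; [|split]; apply injective_projections; simpl; ring.
Qed.

Definition rr (Y : config) := fst (Y 0%nat) ^ 2 + snd (Y 0%nat) ^ 2.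

Lemma rho_formula a beta g Y : betaOK beta g -> symc Y ->
  2 * fst (Y 0%nat) * rhs1 a beta Y 0 + 2 * snd (Y 0%nat) * rhs2 a beta Y 0 =
  16 * rr Y * ((a - beta (2 * rr Y) / (8 * beta (2 * rr Y) + 4 * beta (4 * rr Y))) * g (2 * rr Y)
    + ((1 - 8 * a) / 4 - beta (4 * rr Y) / (8 * beta (2 * rr Y) + 4 * beta (4 * rr Y))) * g (4 * rr Y)).
Proof.
  intros Hb [E1 [E2 E3]].
  pose proof Hb as [H1 [_ [_ [_ [_ Hd]]]]].
  set (r := rr Y).
  assert (Hr : 0 <= r) by (unfold r, rr; pose proof (pow2_ge_0 (fst (Y 0%nat))); pose proof (pow2_ge_0 (snd (Y 0%nat))); lra).
  assert (S2 : forall k l, sqdist Y k l = ((fst (Y k) - fst (Y l)) ^ 2 + (snd (Y k) - snd (Y l)) ^ 2)) by reflexivity.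
  assert (D01 : sqdist Y 0 1 = 2 * r) by (rewrite S2, E1; unfold r, rr; simpl; ring).
  assert (D02 : sqdist Y 0 2 = 4 * r) by (rewrite S2, E2; unfold r, rr; simpl; ring).
  assert (D03 : sqdist Y 0 3 = 2 * r) by (rewrite S2, E3; unfold r, rr; simpl; ring).
  assert (D10 : sqdist Y 1 0 = 2 * r) by (rewrite S2, E1; unfold r, rr; simpl; ring).
  assert (D12 : sqdist Y 1 2 = 2 * r) by (rewrite S2, E1, E2; unfold r, rr; simpl; ring).
  assert (D13 : sqdist Y 1 3 = 4 * r) by (rewrite S2, E1, E3; unfold r, rr; simpl; ring).
  assert (D20 : sqdist Y 2 0 = 4 * r) by (rewrite S2, E2; unfold r, rr; simpl; ring).
  assert (D21 : sqdist Y 2 1 = 2 * r) by (rewrite S2, E1, E2; unfold r, rr; simpl; ring).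
  assert (D23 : sqdist Y 2 3 = 2 * r) by (rewrite S2, E2, E3; unfold r, rr; simpl; ring).
  assert (D30 : sqdist Y 3 0 = 2 * r) by (rewrite S2, E3; unfold r, rr; simpl; ring).
  assert (D31 : sqdist Y 3 1 = 4 * r) by (rewrite S2, E1, E3; unfold r, rr; simpl; ring).
  assert (D32 : sqdist Y 3 2 = 2 * r) by (rewrite S2, E2, E3; unfold r, rr; simpl; ring).
  assert (HZ : Zsum beta Y = 8 * beta (2 * r) + 4 * beta (4 * r)).
  { unfold Zsum, sum4. cbv beta. cbn [Nat.eqb].
    rewrite D01, D02, D03, D10, D12, D13, D20, D21, D23, D30, D31, D32. ring. }
  pose proof (H1 (2 * r) ltac:(lra)) as [P2 _]. pose proof (H1 (4 * r) ltac:(lra)) as [P4 _].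
  unfold rhs1, rhs2, qmat, sum4. cbv beta. cbn [Nat.eqb].
  rewrite HZ, D01, D02, D03. rewrite !Hd by lra.
  unfold pmat; cbn [Nat.eqb Nat.modulo Nat.add]. simpl.
  rewrite E1, E2, E3. simpl. unfold r, rr in *. field. lra.
Qed.

Definition Sfun (a : R) (beta g : R -> R) (r : R) : R :=
  (a - beta (2 * r) / (8 * beta (2 * r) + 4 * beta (4 * r))) * g (2 * r)
    + ((1 - 8 * a) / 4 - beta (4 * r) / (8 * beta (2 * r) + 4 * beta (4 * r))) * g (4 * r).

Lemma rr_nonneg Y : 0 <= rr Y.
Proof. unfold rr. pose proof (pow2_ge_0 (fst (Y 0%nat))); pose proof (pow2_ge_0 (snd (Y 0%nat))); lra. Qed.

Lemma rho_props a beta g X0 Y : betaOK beta g -> Y 0 = init_config X0 -> is_flow_solution a beta Y ->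
  (forall t, 0 < t -> is_derive (fun u => rr (Y u)) t (16 * rr (Y t) * Sfun a beta g (rr (Y t)))) /\
  (forall s, continuous (ext (fun u => rr (Y u))) s) /\
  rr (Y 0) = X0 ^ 2 /\
  (forall t, 0 <= t -> sqrt (4 * rr (Y t)) <= diam (Y t)).
Proof.
  intros Hb H0 HY. split; [|split; [|split]].
  - intros t Ht. destruct (proj2 HY t Ht 0%nat ltac:(lia)) as [A B].
    eapply der_eq.
    apply (der_plus (fun u => fst (Y u 0%nat) ^ 2) (fun u => snd (Y u 0%nat) ^ 2)).
    apply (der_sq (fun u => fst (Y u 0%nat))). exact A.
    apply (der_sq (fun u => snd (Y u 0%nat))). exact B.
    unfold Sfun. rewrite <- (rho_formula a beta g (Y t) Hb (symc_of a beta g X0 Y Hb H0 HY t ltac:(lra))).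
    reflexivity.
  - intro s. apply (continuous_ext (fun u => ext (fun u => coord (Y u) 0) u ^ 2 + ext (fun u => coord (Y u) 4) u ^ 2)).
    intro x. reflexivity.
    apply cont_plus; apply cont_sq. apply (coord_cont a beta Y 0 HY); lia. apply (coord_cont a beta Y 4 HY); lia.
  - unfold rr. rewrite H0. simpl. ring.
  - intros t Ht. destruct (symc_of a beta g X0 Y Hb H0 HY t Ht) as [E1 [E2 E3]].
    assert (Hs : sqdist (Y t) 0 2 = 4 * rr (Y t)).
    { unfold sqdist, rr. rewrite E2. simpl. ring. }
    rewrite <- Hs. unfold diam, max4.
    eapply Rle_trans; [|apply Rmax_l]. eapply Rle_trans; [|apply Rmax_l].
    eapply Rle_trans; [|apply Rmax_r]. apply Rmax_l.
Qed.

Lemma exp_le x y : x <= y -> exp x <= exp y.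
Proof. intros [H|H]. left; apply exp_increasing; auto. subst; lra. Qed.

Definition gc (x : R) : R := - / (1 + x).
Definition gg (x : R) : R := -1.

Lemma inv_lip x y : 0 <= x -> 0 <= y -> Rabs (/ (1 + x) - / (1 + y)) <= Rabs (x - y).
Proof. intros Hx Hy.
  replace (/ (1 + x) - / (1 + y)) with ((y - x) * / ((1 + x) * (1 + y))) by (field; lra).
  rewrite Rabs_mult, Rabs_minus_sym.
  assert (0 < / ((1 + x) * (1 + y))) by (apply Rinv_0_lt_compat; nra).
  assert (/ ((1 + x) * (1 + y)) <= 1).
  { rewrite <- Rinv_1. apply Rinv_le_contravar. lra. nra. }
  rewrite (Rabs_pos_eq (/ _)) by lra. pose proof (Rabs_pos (x - y)). nra. Qed.

Lemma cauchy_ok : betaOK beta_cauchy gc.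
Proof.
  unfold betaOK, beta_cauchy, gc. split; [|split; [|split; [|split; [|split]]]].
  - intros x Hx. assert (0 < / (1 + x)) by (apply Rinv_0_lt_compat; lra). split; auto.
    rewrite Rabs_pos_eq by lra. rewrite <- Rinv_1. apply Rinv_le_contravar; lra.
  - apply inv_lip.
  - intros D HD. exists (/ (1 + D)). split. apply Rinv_0_lt_compat; lra.
    intros x Hx. apply Rinv_le_contravar; lra.
  - intros x Hx. rewrite Rabs_Ropp. assert (0 < / (1 + x)) by (apply Rinv_0_lt_compat; lra).
    rewrite Rabs_pos_eq by lra. rewrite <- Rinv_1. apply Rinv_le_contravar; lra.
  - intros x y Hx Hy. replace (- / (1 + x) - - / (1 + y)) with (- (/ (1 + x) - / (1 + y))) by ring.
    rewrite Rabs_Ropp. apply inv_lip; auto.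
  - intros x Hx. unfold dlogb, beta_cauchy. apply is_derive_unique.
    auto_derive. split. lra. split; [apply Rinv_0_lt_compat; lra|auto].
    rewrite Rinv_inv. field. lra.
Qed.

Lemma exp_lip1 x y : 0 <= x <= y -> Rabs (exp (- x) - exp (- y)) <= Rabs (x - y).
Proof. intros [Hx Hxy].
  assert (E : exp (- y) = exp (- x) * exp (- (y - x))) by (rewrite <- exp_plus; f_equal; ring).
  assert (Hu : 0 < exp (- x)) by apply exp_pos.
  assert (Hu1 : exp (- x) <= 1) by (rewrite <- exp_0; apply exp_le; lra).
  assert (Hw : 0 < exp (- (y - x))) by apply exp_pos.
  assert (Hw1 : exp (- (y - x)) <= 1) by (rewrite <- exp_0; apply exp_le; lra).
  pose proof (exp_ineq1_le (- (y - x))).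
  rewrite E. rewrite Rabs_pos_eq by nra. rewrite Rabs_minus_sym, Rabs_pos_eq by lra. nra. Qed.

Lemma gauss_ok : betaOK beta_gauss gg.
Proof.
  unfold betaOK, beta_gauss, gg. split; [|split; [|split; [|split; [|split]]]].
  - intros x Hx. split. apply exp_pos. rewrite Rabs_pos_eq by (left; apply exp_pos).
    rewrite <- exp_0; apply exp_le; lra.
  - intros x y Hx Hy. destruct (Rle_dec x y).
    apply exp_lip1; lra. rewrite Rabs_minus_sym, (Rabs_minus_sym x). apply exp_lip1; lra.
  - intros D HD. exists (exp (- D)). split. apply exp_pos. intros x Hx. apply exp_le; lra.
  - intros x _. unfold Rabs; destruct Rcase_abs; lra.
  - intros x y _ _. replace (-1 - -1) with 0 by ring. rewrite Rabs_R0. apply Rabs_pos.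
  - intros x Hx. unfold dlogb, beta_gauss. apply is_derive_unique.
    apply (is_derive_ext (fun u => - u)). intro u. rewrite ln_exp. reflexivity.
    auto_derive; auto.
Qed.

Lemma gauss_S a r : 0 <= r -> 
  Sfun a beta_gauss gg r = (4 * a * exp (- (2 * r)) + 8 * a - 1) / (8 + 4 * exp (- (2 * r))).
Proof. intros Hr. unfold Sfun, beta_gauss, gg.
  assert (E : exp (- (4 * r)) = exp (- (2 * r)) * exp (- (2 * r))) by (rewrite <- exp_plus; f_equal; ring).
  rewrite E. pose proof (exp_pos (- (2 * r))). field; repeat split; nra. Qed.

Lemma le_div c N D : 0 < D -> c * D <= N -> c <= N / D.
Proof. intros HD H. apply Rmult_le_reg_r with D; auto.
  replace (N / D * D) with N by (field; lra). lra. Qed.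

Lemma deriv_pos_left (f : R -> R) c l : is_derive f c l -> 0 < l ->
  forall e, 0 < e -> exists s, c - e < s < c /\ f s < f c.
Proof. intros Hd Hl e He. apply is_derive_Reals in Hd.
  destruct (Hd l Hl) as [d Hdd].
  set (h := - Rmin (d / 2) (e / 2)).
  assert (Hd0 : 0 < d) by (destruct d; auto).
  assert (Hh : h < 0) by (unfold h; apply Ropp_lt_gt_0_contravar; apply Rmin_pos; lra).
  assert (Hh2 : - h <= d / 2) by (unfold h; rewrite Ropp_involutive; apply Rmin_l).
  assert (Hh3 : - h <= e / 2) by (unfold h; rewrite Ropp_involutive; apply Rmin_r).
  specialize (Hdd h ltac:(lra)). assert (Rabs h < d) by (rewrite Rabs_left; lra).
  specialize (Hdd H). apply Rabs_def2 in Hdd. destruct Hdd as [_ Hq].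
  exists (c + h). split. lra.
  assert (0 < (f (c + h) - f c) / h) by lra.
  destruct (Rlt_le_dec (f (c + h)) (f c)); auto.
  assert ((f (c + h) - f c) / h <= 0).
  { unfold Rdiv. apply Rmult_le_0_l. lra. left; apply Rinv_lt_0_compat; lra. }
  lra.
Qed.

Theorem part2 : forall (a X0 : R) (Y : R -> config),
     1 / 12 < a -> a < 1 / 8 -> 0 < X0 ->
     Y 0 = init_config X0 ->
     is_flow_solution a beta_gauss Y ->
     exists c : R, 0 < c /\
       forall t : R, 0 <= t -> c <= diam (Y t).
Proof.
  intros a X0 Y Ha1 Ha2 HX H0 HY.
  destruct (rho_props a beta_gauss gg X0 Y gauss_ok H0 HY) as [Hd [Hc [Hr0 Hdiam]]].
  set (rho := fun u => rr (Y u)) in *.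
  change (rho 0 = X0 ^ 2) in Hr0.
  assert (Hd' : forall t, 0 < t -> is_derive rho t (16 * rho t * Sfun a beta_gauss gg (rho t))) by exact Hd.
  clear Hd; rename Hd' into Hd.
  assert (Hrn : forall u, 0 <= rho u) by (intro; apply rr_nonneg).
  assert (HS1 : forall r, 0 <= r -> -1/4 <= Sfun a beta_gauss gg r).
  { intros r Hr. rewrite gauss_S by auto. pose proof (exp_pos (- (2 * r))).
    apply le_div. lra. nra. }
  set (k := (1 - 8 * a) / (4 * a)).
  assert (Hk0 : 0 < k) by (unfold k; apply Rdiv_lt_0_compat; lra).
  assert (Hk1 : k < 1) by (unfold k; apply Rmult_lt_reg_r with (4 * a); [lra|];
     unfold Rdiv; rewrite Rmult_assoc, Rinv_l by lra; lra).
  set (r1 := - ln k / 2).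
  assert (Hlk : ln k < 0) by (rewrite <- ln_1; apply ln_increasing; lra).
  assert (Hr1 : 0 < r1) by (unfold r1; lra).
  assert (HS2 : forall r, 0 <= r -> r < r1 -> 0 < Sfun a beta_gauss gg r).
  { intros r Hr Hrr. rewrite gauss_S by auto. pose proof (exp_pos (- (2 * r))).
    assert (k < exp (- (2 * r))).
    { rewrite <- (exp_ln k) by auto. apply exp_increasing. unfold r1 in Hrr. lra. }
    assert (4 * a * k = 1 - 8 * a) by (unfold k; field; lra).
    apply Rdiv_lt_0_compat; nra. }
  assert (Hpos : forall t, 0 <= t -> 0 < rho t).
  { intros t [Ht|Ht]; [|subst; rewrite Hr0; nra].
    set (h := fun u => rho u * exp (4 * u)).
    destruct (mvt0 h (fun u => 16 * rho u * Sfun a beta_gauss gg (rho u) * exp (4 * u) + rho u * (exp (4 * u) * 4)) t Ht)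
      as [c [Hc1 Hc2]].
    - intros s Hs. unfold h.
      assert (Hex : is_derive (fun u => exp (4 * u)) s (exp (4 * s) * 4)) by (auto_derive; auto; ring).
      exact (der_mult rho (fun u => exp (4 * u)) s _ _ (Hd s Hs) Hex).
    - intro s. unfold ext, h. apply cont_mult. apply Hc.
      apply (cont_all (fun u => exp (4 * u))). intro x. eapply deriv_cont. auto_derive; auto.
    - unfold h in Hc2. rewrite Hr0 in Hc2. rewrite Rmult_0_r, exp_0 in Hc2.
      pose proof (HS1 (rho c) (Hrn c)). pose proof (Hrn c).
      pose proof (exp_pos (4 * c)). pose proof (exp_pos (4 * t)).
      assert (0 <= 16 * rho c * Sfun a beta_gauss gg (rho c) * exp (4 * c) + rho c * (exp (4 * c) * 4)).
      { assert (0 <= rho c * (16 * Sfun a beta_gauss gg (rho c) + 4)) by nra. nra. }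
      assert (0 < rho t * exp (4 * t)) by nra.
      destruct (Rle_lt_dec (rho t) 0); auto. nra. }
  set (m := Rmin (X0 ^ 2) (r1 / 2)).
  assert (Hm : 0 < m) by (unfold m; apply Rmin_pos; nra).
  assert (Hlow : forall t, 0 <= t -> m <= rho t).
  { intros t Ht. destruct (Rle_lt_dec m (rho t)) as [|Hlt]; auto. exfalso.
    assert (Hm1 : m <= X0 ^ 2) by apply Rmin_l.
    assert (Hm2 : m <= r1 / 2) by apply Rmin_r.
    destruct (continuity_ab_min (ext rho) 0 t Ht) as [c [Hcm Hcr]].
    { intros x _. apply continuity_pt_filterlim. apply Hc. }
    assert (Ec : forall s, 0 <= s -> ext rho s = rho s) by (intros; unfold ext; rewrite Rmax_right; auto).
    pose proof (Hcm t ltac:(lra)) as Ht3. rewrite !Ec in Ht3 by lra.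
    assert (Hc0 : 0 < c).
    { destruct (proj1 Hcr) as [|E]; auto. subst c. rewrite Hr0 in Ht3. lra. }
    pose proof (Hpos c ltac:(lra)) as Hpc.
    assert (Hl : 0 < 16 * rho c * Sfun a beta_gauss gg (rho c)).
    { pose proof (HS2 (rho c) ltac:(lra) ltac:(lra)). nra. }
    destruct (deriv_pos_left rho c _ (Hd c Hc0) Hl c Hc0) as [s [Hs1 Hs2]].
    pose proof (Hcm s ltac:(lra)) as Hs3. rewrite !Ec in Hs3 by lra. lra. }
  exists (sqrt (4 * m)). split. apply sqrt_lt_R0; lra.
  intros t Ht. eapply Rle_trans; [|apply (Hdiam t Ht)].
  apply sqrt_le_1_alt. pose proof (Hlow t Ht) as Hl. unfold rho in Hl. lra.
Qed.

Lemma cauchy_S a r : 0 <= r ->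
  Sfun a beta_cauchy gc r = ((20 * a - 2) * (1 + 2 * r) + (1 - 8 * a)) / ((1 + 2 * r) * (12 + 88 * r + 160 * r ^ 2)).
Proof. intros Hr. unfold Sfun, beta_cauchy, gc. field. repeat split; nra. Qed.

Lemma frac_nonneg N D : 0 <= N -> 0 < D -> 0 <= N / D.
Proof. intros. unfold Rdiv. apply Rmult_le_pos; auto. left; apply Rinv_0_lt_compat; auto. Qed.

Theorem part1 : forall (a X0 : R) (Y : R -> config),
     1 / 10 < a -> a < 1 / 8 -> 0 < X0 ->
     Y 0 = init_config X0 ->
     is_flow_solution a beta_cauchy Y ->
     exists c : R, 0 < c /\
       forall t : R, 1 <= t -> c * Rpower t (1 / 4) <= diam (Y t).
Proof.
  intros a X0 Y Ha1 Ha2 HX H0 HY.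
  destruct (rho_props a beta_cauchy gc X0 Y cauchy_ok H0 HY) as [Hd [Hc [Hr0 Hdiam]]].
  set (rho := fun u => rr (Y u)) in *.
  change (rho 0 = X0 ^ 2) in Hr0.
  assert (Hd' : forall t, 0 < t -> is_derive rho t (16 * rho t * Sfun a beta_cauchy gc (rho t))) by exact Hd.
  clear Hd; rename Hd' into Hd.
  assert (Hrn : forall u, 0 <= rho u) by (intro; apply rr_nonneg).
  set (e := 20 * a - 2). set (f := 1 - 8 * a).
  assert (He : 0 < e) by (unfold e; lra). assert (Hf : 0 < f) by (unfold f; lra).
  assert (HS0 : forall r, 0 <= r -> 0 <= Sfun a beta_cauchy gc r).
  { intros r Hr. rewrite cauchy_S by auto. fold e f. apply frac_nonneg. nra.
    apply Rmult_lt_0_compat; nra. }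
  set (r0 := X0 ^ 2).
  assert (Hr00 : 0 < r0) by (unfold r0; nra).
  assert (Hmono : forall t, 0 <= t -> r0 <= rho t).
  { intros t [Ht|Ht]; [|subst; rewrite Hr0; unfold r0; lra].
    destruct (mvt0 rho (fun u => 16 * rho u * Sfun a beta_cauchy gc (rho u)) t Ht Hd Hc) as [c [Hc1 Hc2]].
    pose proof (HS0 (rho c) (Hrn c)). pose proof (Hrn c).
    assert (0 <= 16 * rho c * Sfun a beta_cauchy gc (rho c) * t) by
      (apply Rmult_le_pos; [|lra]; apply Rmult_le_pos; lra).
    unfold r0. lra. }
  set (P0 := 12 + 88 * r0 + 160 * r0 ^ 2).
  assert (HP0 : 0 < P0) by (unfold P0; nra).
  set (K := 16 * e * r0 ^ 2 / P0).
  assert (HK0 : 0 < K) by (unfold K; apply Rdiv_lt_0_compat; [apply Rmult_lt_0_compat; [lra| apply pow_lt; lra]|lra]).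
  assert (HK : forall r, r0 <= r -> K <= 16 * r ^ 2 * Sfun a beta_cauchy gc r).
  { intros r Hr. rewrite cauchy_S by lra. fold e f.
    set (BC := 12 + 88 * r + 160 * r ^ 2).
    assert (HBC : 0 < BC) by (unfold BC; nra).
    assert (Ha : 0 < 1 + 2 * r) by lra.
    assert (E1 : 16 * r ^ 2 * ((e * (1 + 2 * r) + f) / ((1 + 2 * r) * BC)) =
                 16 * e * r ^ 2 / BC + 16 * r ^ 2 * f / ((1 + 2 * r) * BC)) by (field; lra).
    rewrite E1.
    assert (0 <= 16 * r ^ 2 * f / ((1 + 2 * r) * BC)) by (apply frac_nonneg; nra).
    assert (K <= 16 * e * r ^ 2 / BC).
    { unfold K. assert (E2 : 16 * e * r ^ 2 / BC - 16 * e * r0 ^ 2 / P0 =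
          16 * e * (r ^ 2 * P0 - r0 ^ 2 * BC) / (BC * P0)) by (field; lra).
      assert (0 <= 16 * e * (r ^ 2 * P0 - r0 ^ 2 * BC) / (BC * P0)).
      { apply frac_nonneg; [|nra]. apply Rmult_le_pos. lra.
        unfold P0, BC. assert (0 <= r - r0) by lra.
        assert (Eq3 : r ^ 2 * (12 + 88 * r0 + 160 * r0 ^ 2) - r0 ^ 2 * (12 + 88 * r + 160 * r ^ 2)
                = (r - r0) * (12 * (r + r0) + 88 * r * r0)) by ring.
        rewrite Eq3. apply Rmult_le_pos; nra. }
      lra. }
    lra. }
  assert (Hgrow : forall t, 0 <= t -> 2 * K * t <= rho t ^ 2).
  { intros t [Ht|Ht]; [|subst; rewrite Hr0; nra].
    set (h := fun u => rho u ^ 2 - 2 * K * u).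
    destruct (mvt0 h (fun u => 2 * rho u * (16 * rho u * Sfun a beta_cauchy gc (rho u)) - 2 * K) t Ht)
      as [c [Hc1 Hc2]].
    - intros s Hs. unfold h. apply der_minus. apply (der_sq rho). apply Hd; auto.
      auto_derive; auto. ring.
    - intro s. unfold ext, h. apply cont_minus. apply cont_sq. apply Hc.
      apply (cont_all (fun u => 2 * K * u)). intro x. eapply deriv_cont. auto_derive; auto.
    - unfold h in Hc2. rewrite Hr0 in Hc2.
      pose proof (HK (rho c) (Hmono c ltac:(lra))).
      assert (0 <= 2 * rho c * (16 * rho c * Sfun a beta_cauchy gc (rho c)) - 2 * K) by nra.
      assert (0 <= (2 * rho c * (16 * rho c * Sfun a beta_cauchy gc (rho c)) - 2 * K) * t) by nra.
      nra. }
  set (c := Rmin 1 (32 * K)).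
  assert (Hc0 : 0 < c) by (unfold c; apply Rmin_pos; lra).
  assert (Hc1 : c <= 1) by apply Rmin_l.
  assert (Hc2 : c <= 32 * K) by apply Rmin_r.
  exists c. split; auto. intros t Ht.
  set (w := Rpower t (1 / 4)).
  assert (Hw : 0 < w) by (unfold w, Rpower; apply exp_pos).
  assert (Hw4 : w ^ 4 = t).
  { unfold w. rewrite <- Rpower_pow by (unfold Rpower; apply exp_pos).
    rewrite Rpower_mult. replace (1 / 4 * INR 4) with 1 by (simpl; field). apply Rpower_1. lra. }
  eapply Rle_trans; [|apply (Hdiam t ltac:(lra))].
  pose proof (Hgrow t ltac:(lra)) as Hg. pose proof (Hrn t) as Hrt. change (rr (Y t)) with (rho t).
  assert (Hc4 : c ^ 4 <= 32 * K).
  { assert (c ^ 4 <= c). { assert (c ^ 2 <= 1) by nra. assert (c ^ 3 <= 1) by nra. simpl. nra. } lra. }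
  assert (Hq : ((c * w) ^ 2) ^ 2 <= (4 * rho t) ^ 2).
  { replace (((c * w) ^ 2) ^ 2) with (c ^ 4 * w ^ 4) by ring. rewrite Hw4.
    assert (c ^ 4 * t <= 32 * K * t) by (apply Rmult_le_compat_r; lra). nra. }
  assert (Hq2 : (c * w) ^ 2 <= 4 * rho t).
  { assert (0 <= (c * w) ^ 2) by apply pow2_ge_0.
    destruct (Rle_lt_dec ((c * w) ^ 2) (4 * rho t)); auto. nra. }
  rewrite <- (sqrt_pow2 (c * w)) by nra. apply sqrt_le_1_alt. exact Hq2.
Qed.

Theorem mainTheorem7 :
  (forall (a X0 : R) (Y : R -> config),
     1 / 10 < a -> a < 1 / 8 -> 0 < X0 ->
     Y 0 = init_config X0 ->
     is_flow_solution a beta_cauchy Y ->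
     exists c : R, 0 < c /\
       forall t : R, 1 <= t -> c * Rpower t (1 / 4) <= diam (Y t)) /\
  (forall (a X0 : R) (Y : R -> config),
     1 / 12 < a -> a < 1 / 8 -> 0 < X0 ->
     Y 0 = init_config X0 ->
     is_flow_solution a beta_gauss Y ->
     exists c : R, 0 < c /\
       forall t : R, 0 <= t -> c <= diam (Y t)).
Proof.
  split. exact part1. exact part2.
Qed.
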